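(* Let $\mathbb{F}$ be a clone on a set $A$ and let $\mathbb{S}\subseteq\mathbb{F}^{(1)}$ be a transformation semigroup (closed under composition). If $\operatorname{cf}(\mathbb{S})>\aleph_0$ and $\operatorname{rank}(\mathbb{F}:\mathbb{S})$ is finite, then $\operatorname{cf}(\mathbb{F})>\aleph_0$.
   Context: A clone on $A$ is a set of finitary operations on $A$ containing all projections and closed under composition $f\circ\langle g_1,\dots,g_n\rangle(\bar x)=f(g_1(\bar x),\dots,g_n(\bar x))$; $\mathbb{F}^{(n)}$ denotes the $n$-ary members of $\mathbb{F}$; $\langle M\rangle_{O_A}$ is the clone generated by $M$. $\operatorname{rank}(\mathbb{F}:M)$ is the least cardinality of $N\subseteq\mathbb{F}$ with $\langle M\cup N\rangle_{O_A}=\mathbb{F}$. The cofinality $\operatorname{cf}$ of a non-finitely generated algebraic structure (clone, semigroup) is the least cardinal $\lambda$ such that it is the union of an increasing chain $(\mathbb{A}_i)_{i<\lambda}$ of proper substructures (subclones, resp. subsemigroups). *)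

(* Defs.v *)
From mathcomp Require Import all_boot.
Set Implicit Arguments. Unset Strict Implicit. Unset Printing Implicit Defensive.

Definition op (A : Type) : Type := {n : nat & ('I_n -> A) -> A}.

Definition mkop (A : Type) (n : nat) (f : ('I_n -> A) -> A) : op A := existT _ n f.

Definition proj_op (A : Type) (n : nat) (i : 'I_n) : op A := mkop (fun x => x i).

Definition comp_op (A : Type) (n m : nat) (f : ('I_n -> A) -> A)
  (g : 'I_n -> ('I_m -> A) -> A) : op A := mkop (fun x => f (fun i => g i x)).

Definition is_clone (A : Type) (C : op A -> Prop) : Prop :=
  (forall n (i : 'I_n), C (proj_op A i)) /\
  (forall n m (f : ('I_n -> A) -> A) (g : 'I_n -> ('I_m -> A) -> A),
      C (mkop f) -> (forall i, C (mkop (g i))) -> C (comp_op f g)).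

Definition gen_clone (A : Type) (M : op A -> Prop) : op A -> Prop :=
  fun f => forall C, is_clone C -> (forall g, M g -> C g) -> C f.

Definition unary_op (A : Type) (s : A -> A) : op A := mkop (fun x : 'I_1 -> A => s (x ord0)).

Definition is_semigroup (A : Type) (S : (A -> A) -> Prop) : Prop :=
  forall s t, S s -> S t -> S (s \o t).

Definition finite_rank (A : Type) (F : op A -> Prop) (S : (A -> A) -> Prop) : Prop :=
  exists (k : nat) (N : 'I_k -> op A),
    (forall i, F (N i)) /\
    (forall f, gen_clone (fun g => (exists s, S s /\ g = unary_op s) \/ (exists i, g = N i)) f
               <-> F f).

(* cf(F) > aleph_0 for a clone F: F is not the union of an increasing
   omega-chain of proper subclones. *)
Definition clone_cf_uncountable (A : Type) (F : op A -> Prop) : Prop :=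
  ~ exists Fk : nat -> op A -> Prop,
      (forall k, is_clone (Fk k)) /\
      (forall k f, Fk k f -> F f) /\
      (forall k, exists f, F f /\ ~ Fk k f) /\
      (forall k f, Fk k f -> Fk k.+1 f) /\
      (forall f, F f -> exists k, Fk k f).

(* cf(S) > aleph_0 for a semigroup S: S is not the union of an increasing
   omega-chain of proper subsemigroups. *)
Definition sg_cf_uncountable (A : Type) (S : (A -> A) -> Prop) : Prop :=
  ~ exists Sk : nat -> (A -> A) -> Prop,
      (forall k, is_semigroup (Sk k)) /\
      (forall k s, Sk k s -> S s) /\
      (forall k, exists s, S s /\ ~ Sk k s) /\
      (forall k s, Sk k s -> Sk k.+1 s) /\
      (forall s, S s -> exists k, Sk k s).

(* Main.v *)
Require Import Defs.
From mathcomp Require Import all_boot.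
From Stdlib Require Import Classical.

Lemma chain_mono (T : Type) (P : nat -> T -> Prop) :
  (forall k f, P k f -> P k.+1 f) -> forall i j f, i <= j -> P i f -> P j f.
Proof.
move=> H i j f; elim: j => [|j IH].
  by rewrite leqn0 => /eqP ->.
rewrite leq_eqVlt => /orP [/eqP -> //|]; rewrite ltnS => Hij Hi.
exact: H (IH Hij Hi).
Qed.

Theorem proposition6p1 (A : Type) (F : op A -> Prop) (S : (A -> A) -> Prop) :
  is_clone F ->
  is_semigroup S ->
  (forall s, S s -> F (unary_op s)) ->
  sg_cf_uncountable S ->
  finite_rank F S ->
  clone_cf_uncountable F.
Proof.
move=> HF HS HSF Hcf [k [N [HN Hgen]]] [Fk [Hcl [Hsub [Hprop [Hinc Hcov]]]]].
have mono := @chain_mono (op A) Fk Hinc.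
have [K HK] : exists K, forall i : 'I_k, Fk K (N i).
  suff: forall m, exists K, forall i : 'I_k, val i < m -> Fk K (N i).
    move=> H; have [K0 HK0] := H k; exists K0 => i; exact: (HK0 i (ltn_ord i)).
  elim=> [|m [K IH]]; first by exists 0.
  case: (ltnP m k) => Hm.
    have [j Hj] := Hcov _ (HN (Ordinal Hm)).
    exists (maxn K j) => i; rewrite ltnS leq_eqVlt => /orP [/eqP Him|Him].
      have -> : i = Ordinal Hm by apply: val_inj.
      by apply: mono Hj; rewrite leq_maxr.
    by apply: mono (IH _ Him); rewrite leq_maxl.
  exists K => i Hi; apply: IH; exact: leq_trans (ltn_ord i) Hm.
apply: Hcf.
exists (fun n s => S s /\ Fk (n + K) (unary_op s)).
split; [|split; [|split; [|split]]].
- move=> n s t [Ss Fs] [St Ft]; split; first exact: HS.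
  have [_ Hc] := Hcl (n + K).
  exact: (Hc 1 1 (fun y => s (y ord0)) (fun _ x => t (x ord0)) Fs (fun _ => Ft)).
- by move=> n s [].
- move=> n; apply: NNPP => Hn.
  have Hall : forall s, S s -> Fk (n + K) (unary_op s).
    move=> s Ss; apply: NNPP => Hns; apply: Hn; exists s; split => // [[_ ?]]; by [].
  have [f [Ff Hnf]] := Hprop (n + K); apply: Hnf.
  move: Ff => /(proj2 (Hgen f)) Hg.
  apply: Hg; first exact: Hcl.
  move=> g [[s [Ss ->]]|[i ->]]; first exact: Hall.
  by apply: mono (HK i); rewrite leq_addl.
- by move=> n s [Ss Fs]; split => //; apply: Hinc.
- move=> s Ss; have [j Hj] := Hcov _ (HSF _ Ss).
  exists (j - K); split => //; apply: mono Hj; by rewrite addnC -leq_subLR.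
Qed.
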